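(* Fix the quantities $P(h)$, $P(h\mid h)$, $P(h\mid\ell)$ satisfying the standing assumptions, and fix a strictly proper scoring rule $PS$. Then there exists $n_0$, depending only on these data, with the following property. For every $n\ge n_0$ and every symmetric common prior on $\{\ell,h\}^n$ whose one- and two-agent marginals are given by these quantities, the truthful profile $\Sigma^*$ is a Bayesian $k_B$-strong equilibrium. Here $$k_B^h=\begin{cases}\left\lceil \dfrac{(n-1)\,\mathbb E_{s\sim P_\ell}[PS(s,P_\ell)-PS(s,P_h)]}{P(\ell\mid\ell)\,(PS(h,P_h)-PS(\ell,P_h))}\right\rceil & \text{if } PS(h,P_h)>PS(\ell,P_h),\\ n&\text{otherwise,}\end{cases}$$ $$k_B^\ell=\begin{cases}\left\lceil \dfrac{(n-1)\,\mathbb E_{s\sim P_h}[PS(s,P_h)-PS(s,P_\ell)]}{P(h\mid h)\,(PS(\ell,P_\ell)-PS(h,P_\ell))}\right\rceil & \text{if } PS(\ell,P_\ell)>PS(h,P_\ell),\\ n&\text{otherwise,}\end{cases}$$ and $k_B=\min(k_B^h,k_B^\ell,n)$. Moreover, for every integer $k$ with $k_B<k\le n$, $\Sigma^*$ is not a Bayesian $k$-strong equilibrium.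
   Context: Peer prediction setting. There are $n\ge 2$ agents $[n]$. Each agent $i$ privately observes a signal $\Psi_i\in\{\ell,h\}$ and reports $r_i\in\{\ell,h\}$. Signals are drawn from a common prior $Q$ on $\{\ell,h\}^n$ that is symmetric, i.e., invariant under permutations of the agents. $P(s)$ denotes the marginal probability that an agent has signal $s$. $P(s\mid s')$ denotes the probability that another agent $j\ne i$ has signal $s$ given that agent $i$ has signal $s'$. $P_{s'}=P(\cdot\mid s')$ is the corresponding distribution on $\{\ell,h\}$. Standing assumptions: $P(\ell),P(h)>0$, $P(h\mid h)>P(h\mid\ell)$, $P(h\mid\ell)>0$ and $P(\ell\mid h)>0$. A scoring rule $PS:\{\ell,h\}\times\Delta_{\{\ell,h\}}\to\mathbb R$ is strictly proper if $\mathbb E_{s\sim p}[PS(s,p)]>\mathbb E_{s\sim p}[PS(s,q)]$ for all distributions $p\ne q$. The mechanism gives agent $i$ the utility $v_i=\frac1{n-1}\sum_{j\ne i}PS(r_j,P_{r_i})$. A strategy is a pair $\sigma=(\beta_\ell,\beta_h)\in[0,1]^2$, where $\beta_\ell$ and $\beta_h$ are the probabilities of reporting $h$ given signal $\ell$ and signal $h$, respectively. Given signals, reports are drawn independently. The truthful strategy is $(0,1)$, and $\Sigma^*$ is the profile in which all agents play it. The interim utility $u_i(\Sigma\mid s)$ is the expectation of $v_i$ conditioned on $\Psi_i=s$. A profile $\Sigma$ is a Bayesian $k$-strong equilibrium if there is no set $D\subseteq[n]$ with $|D|\le k$ and no profile $\Sigma'$ such that: (1) agents outside $D$ keep their strategies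 from $\Sigma$; (2) $u_i(\Sigma'\mid s)\ge u_i(\Sigma\mid s)$ for all $i\in D$ and both $s\in\{\ell,h\}$; and (3) strict inequality holds for some $i\in D$ and some $s$. *)

(* Defs.v *)
From HB Require Import structures.
From mathcomp Require Import all_boot all_order all_algebra all_fingroup.
From mathcomp Require Import reals.
Set Implicit Arguments. Unset Strict Implicit. Unset Printing Implicit Defensive.
Import Order.TTheory GRing.Theory Num.Theory.
Local Open Scope ring_scope.

(* Signals / reports: [true] = h, [false] = l.
   A distribution on {l,h} is represented by its probability of h, a real in [0,1]. *)

Section PeerPrediction.
Variable R : realType.

Definition exp_score (PS : bool -> R -> R) (p q : R) : R :=
  p * PS true q + (1 - p) * PS false q.

Definition strictly_proper (PS : bool -> R -> R) : Prop :=
  forall p q : R, 0 <= p <= 1 -> 0 <= q <= 1 -> p != q ->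
    exp_score PS p q < exp_score PS p p.

Variable n : nat.

Definition profile := {ffun 'I_n -> bool}.

Definition is_prior (Q : profile -> R) : Prop :=
  (forall psi, 0 <= Q psi) /\ \sum_(psi : profile) Q psi = 1.

Definition symmetric_prior (Q : profile -> R) : Prop :=
  forall (pi : 'S_n) (psi : profile), Q [ffun i => psi (pi i)] = Q psi.

Definition prQ (Q : profile -> R) (E : pred profile) : R :=
  \sum_(psi : profile | E psi) Q psi.

Definition marg_h (Q : profile -> R) (i : 'I_n) : R := prQ Q (fun psi => psi i).

Definition cond_h (Q : profile -> R) (i j : 'I_n) (s' : bool) : R :=
  prQ Q (fun psi => psi j && (psi i == s')) / prQ Q (fun psi => psi i == s').

Definition has_marginals (Q : profile -> R) (ph phh phl : R) : Prop :=
  (forall i, marg_h Q i = ph) /\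
  (forall i j, i != j -> cond_h Q i j true = phh /\ cond_h Q i j false = phl).

(* A strategy is a pair (beta_l, beta_h) of probabilities of reporting h. *)
Definition strategy := (R * R)%type.
Definition valid_strategy (sg : strategy) : Prop :=
  0 <= sg.1 <= 1 /\ 0 <= sg.2 <= 1.
Definition sprofile := 'I_n -> strategy.
Definition valid_sprofile (S : sprofile) : Prop := forall i, valid_strategy (S i).

Definition truthful : strategy := (0, 1).
Definition truthful_profile : sprofile := fun _ => truthful.

Definition beta (sg : strategy) (s : bool) : R := if s then sg.2 else sg.1.

Definition report_prob (S : sprofile) (psi r : profile) : R :=
  \prod_(k : 'I_n) (if r k then beta (S k) (psi k) else 1 - beta (S k) (psi k)).

Definition Pcond (phh phl : R) (r : bool) : R := if r then phh else phl.

Definition payoff (PS : bool -> R -> R) (phh phl : R) (i : 'I_n) (r : profile) : R :=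
  (n.-1)%:R^-1 * \sum_(j : 'I_n | j != i) PS (r j) (Pcond phh phl (r i)).

Definition interim (Q : profile -> R) (PS : bool -> R -> R) (phh phl : R)
    (S : sprofile) (i : 'I_n) (s : bool) : R :=
  (\sum_(psi : profile | psi i == s)
     Q psi * \sum_(r : profile) report_prob S psi r * payoff PS phh phl i r)
  / prQ Q (fun psi => psi i == s).

Definition k_strong_eq (Q : profile -> R) (PS : bool -> R -> R) (phh phl : R)
    (k : int) (S : sprofile) : Prop :=
  ~ exists (D : {set 'I_n}) (S' : sprofile),
      [/\ (#|D|%:Z <= k)%R,
          valid_sprofile S',
          (forall j, j \notin D -> S' j = S j),
          (forall i s, i \in D -> interim Q PS phh phl S i s <= interim Q PS phh phl S' i s) &
          (exists i s, i \in D /\ interim Q PS phh phl S i s < interim Q PS phh phl S' i s)].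

Definition kBh (PS : bool -> R -> R) (phh phl : R) : int :=
  if PS true phh > PS false phh then
    Num.ceil ((n.-1)%:R * (exp_score PS phl phl - exp_score PS phl phh)
              / ((1 - phl) * (PS true phh - PS false phh)))
  else n%:Z.

Definition kBl (PS : bool -> R -> R) (phh phl : R) : int :=
  if PS false phl > PS true phl then
    Num.ceil ((n.-1)%:R * (exp_score PS phh phh - exp_score PS phh phl)
              / (phh * (PS false phl - PS true phl)))
  else n%:Z.

Definition kB (PS : bool -> R -> R) (phh phl : R) : int :=
  Num.min (kBh PS phh phl) (Num.min (kBl PS phh phl) n%:Z).

End PeerPrediction.

(* Main.v *)
Require Import Defs.
From HB Require Import structures.
From mathcomp Require Import all_boot all_order all_algebra all_fingroup.
From mathcomp Require Import reals.
From mathcomp Require Import zify ring lra.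
Import Order.TTheory GRing.Theory Num.Theory.
Local Open Scope ring_scope.
Set Implicit Arguments. Unset Strict Implicit. Unset Printing Implicit Defensive.

Lemma prod2 (R : realType) n (i j : 'I_n) (U V : 'I_n -> R) :
  i != j ->
  \prod_(k : 'I_n) (if k == i then U k else if k == j then V k else 1) = U i * V j.
Proof.
move=> ij.
rewrite (bigD1 i) //= eqxx (bigD1 j) /=; last by rewrite eq_sym ij.
rewrite eq_sym (negbTE ij) eqxx.
rewrite big1 ?mulr1 // => k /andP[ki kj].
by rewrite (negbTE ki) (negbTE kj).
Qed.

Lemma sum_prod2 (R : realType) n (f : 'I_n -> bool -> R) (g : bool -> bool -> R) (i j : 'I_n) :
  i != j -> (forall k, f k true + f k false = 1) ->
  \sum_(r : {ffun 'I_n -> bool}) (\prod_k f k (r k)) * g (r i) (r j) =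
  \sum_(a : bool) \sum_(b : bool) f i a * f j b * g a b.
Proof.
move=> ij hf.
pose F a b k t := f k t * (if k == i then (t == a)%:R else if k == j then (t == b)%:R else 1 : R).
have E1 r : (\prod_k f k (r k)) * g (r i) (r j) =
   \sum_(a : bool) \sum_(b : bool) (\prod_k F a b k (r k)) * g a b.
  apply: etrans (_ : \sum_(a : bool) \sum_(b : bool) (\prod_k f k (r k)) *
          (\prod_k (if k == i then (r k == a)%:R else if k == j then (r k == b)%:R else 1 : R)) * g a b = _); last first.
    by apply: eq_bigr => a _; apply: eq_bigr => b _; rewrite /F big_split.
  symmetry. transitivity (\sum_(a : bool) \sum_(b : bool) (\prod_k f k (r k)) * ((r i == a)%:R * (r j == b)%:R) * g a b).
    apply: eq_bigr => a _; apply: eq_bigr => b _.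
    by rewrite (prod2 (fun k => (r k == a)%:R) (fun k => (r k == b)%:R) ij).
  symmetry.
  rewrite !big_bool /=.
  by move: (r i) (r j) => [] [] /=; rewrite ?mulr1 ?mulr0 ?mul0r ?addr0 ?add0r.
under eq_bigr do rewrite E1.
rewrite exchange_big /=; apply: eq_bigr => a _.
rewrite exchange_big /=; apply: eq_bigr => b _.
rewrite -mulr_suml -(bigA_distr_bigA (F a b)) /=.
congr (_ * _).
rewrite -(prod2 (fun k => f k a) (fun k => f k b) ij).
apply: eq_bigr => k _; rewrite /F big_bool /=.
case: (k == i); first by case: a; rewrite /= ?mulr0 ?mulr1 ?addr0 ?add0r.
case: (k == j); first by case: b; rewrite /= ?mulr0 ?mulr1 ?addr0 ?add0r.
by rewrite !mulr1.
Qed.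


Lemma prQ_ID (R : realType) n (Q : profile n -> R) (E P : pred (profile n)) :
  prQ Q E = prQ Q (fun psi => E psi && P psi) + prQ Q (fun psi => E psi && ~~ P psi).
Proof. by rewrite /prQ (bigID P). Qed.

Lemma prQ_pos (R : realType) n (Q : profile n -> R) ph phh phl i s :
  is_prior Q -> 0 < ph < 1 -> has_marginals Q ph phh phl ->
  prQ Q (fun psi => psi i == s) != 0.
Proof.
move=> [Q0 Q1] /andP[ph0 ph1] [Hm _].
have Ht : prQ Q (fun psi => psi i == true) = ph.
  by rewrite -(Hm i) /marg_h /prQ; apply: eq_bigl => psi; rewrite eqb_id.
have Hf : prQ Q (fun psi => psi i == false) = 1 - ph.
  rewrite -Q1 -Ht /prQ [in RHS](bigID (fun psi : profile n => psi i)) /=.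
  have e1 : \sum_(psi : profile n | psi i) Q psi = \sum_(psi : profile n | psi i == true) Q psi.
    by apply: eq_bigl => psi; rewrite eqb_id.
  have e2 : \sum_(psi : profile n | ~~ psi i) Q psi = \sum_(psi : profile n | psi i == false) Q psi.
    by apply: eq_bigl => psi; case: (psi i).
  by rewrite e1 e2 addrC addrK.
by case: s; [rewrite Ht | rewrite Hf]; apply/lt0r_neq0; lra.
Qed.

Definition qf (R : realType) n (phh phl : R) (S : sprofile R n) (j : 'I_n) (s : bool) : R :=
  Pcond phh phl s * beta (S j) true + (1 - Pcond phh phl s) * beta (S j) false.

Lemma interim_eq (R : realType) n (Q : profile n -> R) PS ph phh phl S i s :
 is_prior Q -> 0 < ph < 1 -> has_marginals Q ph phh phl ->
 interim Q PS phh phl S i s =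
 (n.-1)%:R^-1 * \sum_(j | j != i)
   (beta (S i) s * exp_score PS (qf phh phl S j s) phh +
    (1 - beta (S i) s) * exp_score PS (qf phh phl S j s) phl).
Proof.
move=> HQ Hph HM.
have m0 := prQ_pos i s HQ Hph HM.
set m := prQ Q (fun psi => psi i == s) in m0 *.
pose bp (sg : strategy R) (t a : bool) : R := if a then beta sg t else 1 - beta sg t.
pose K j (t : bool) := \sum_(a : bool) \sum_(b : bool)
    bp (S i) s a * bp (S j) t b * PS b (Pcond phh phl a).
have E1 (psi : profile n) : psi i == s -> \sum_(r : profile n) report_prob S psi r * payoff PS phh phl i r
   = (n.-1)%:R^-1 * \sum_(j | j != i) K j (psi j).
  move=> /eqP psis.
  rewrite /payoff.
  under eq_bigr do rewrite mulrA (mulrC _ (n.-1)%:R^-1) -mulrA.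
  rewrite -mulr_sumr; congr (_ * _).
  under eq_bigr do rewrite mulr_sumr.
  rewrite exchange_big /=; apply: eq_bigr => j ji.
  have ji' : i != j by rewrite eq_sym.
  rewrite /report_prob.
  have hf k : bp (S k) (psi k) true + bp (S k) (psi k) false = 1 by rewrite /bp addrC subrK.
  have := @sum_prod2 _ _ (fun k => bp (S k) (psi k)) (fun a b => PS b (Pcond phh phl a)) i j ji' hf.
  by rewrite /bp /= => ->; rewrite /K psis.
have E2 j : j != i -> \sum_(psi : profile n | psi i == s) Q psi * K j (psi j) =
    Pcond phh phl s * m * K j true + (m - Pcond phh phl s * m) * K j false.
  move=> ji.
  have ij : i != j by rewrite eq_sym.
  have Hc : prQ Q (fun psi => psi j && (psi i == s)) = Pcond phh phl s * m.
    have hc : forall s', cond_h Q i j s' = Pcond phh phl s'.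
      by have [h1 h2] := (HM.2 i j ij); case => /=.
    have := hc s; rewrite /cond_h -/m => <-.
    by rewrite divfK.
  have Hs := prQ_ID Q (fun psi => psi i == s) (fun psi => psi j).
  have e1 : prQ Q (fun psi => (psi i == s) && psi j) = Pcond phh phl s * m.
    by rewrite -Hc /prQ; apply: eq_bigl => psi; rewrite andbC.
  rewrite -/m e1 in Hs.
  have e2 : prQ Q (fun psi => (psi i == s) && ~~ psi j) = m - Pcond phh phl s * m.
    by apply/eqP; rewrite eq_sym subr_eq addrC -Hs.
  rewrite (bigID (fun psi : profile n => psi j)) /=.
  rewrite -e2 -e1 /prQ !mulr_suml; congr (_ + _); apply: eq_bigr => psi /andP[_].
    by move=> ->.
  by move/negbTE => ->.
rewrite /interim.
transitivity (((n.-1)%:R^-1 * \sum_(j | j != i) \sum_(psi : profile n | psi i == s) Q psi * K j (psi j)) / m).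
  congr (_ / _).
  rewrite (eq_bigr (fun psi => Q psi * ((n.-1)%:R^-1 * \sum_(j | j != i) K j (psi j)))); last first.
    by move=> psi /E1 ->.
  under eq_bigr do rewrite mulrCA.
  rewrite -mulr_sumr; congr (_ * _).
  under eq_bigr do rewrite mulr_sumr.
  by rewrite exchange_big.
rewrite -mulrA mulr_suml; congr (_ * _); apply: eq_bigr => j ji.
rewrite E2 //.
have -> : (Pcond phh phl s * m * K j true + (m - Pcond phh phl s * m) * K j false) / m
   = Pcond phh phl s * K j true + (1 - Pcond phh phl s) * K j false by field.
rewrite /K /bp /qf /exp_score !big_bool /=.
ring.
Qed.


Lemma neg_comb (R : realType) (x a b : R) : 0 <= x <= 1 -> a < 0 -> b < 0 ->
  x * a + (1 - x) * b < 0.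
Proof. move=> /andP[x0 x1] a0 b0. nra. Qed.

Lemma case1_h (R : realType) (phh dh dl Dh r x E : R) :
 0 < dh -> dl < 0 -> 0 < Dh -> r * phh * (-dl) < Dh -> 0 < phh ->
 0 <= x <= 1 -> - (phh * r) <= E -> 
 0 <= -x*Dh + E*((1-x)*dh + x*dl) -> 0 <= E.
Proof.
move=> dh0 dl0 Dh0 hr phh0 /andP[x0 x1] hE hG.
rewrite leNgt; apply/negP => E0.
have h1 : E * dl <= r * phh * (-dl) by nra.
have h2 : E * dh < 0 by nra.
have : x * (E * dl - Dh) + (1 - x) * (E * dh) < 0.
  by apply: neg_comb => //; [rewrite x0 x1 | lra].
lra.
Qed.

Lemma case1_l (R : realType) (phl dh dl Dl r y E : R) :
 0 < dh -> dl < 0 -> 0 < Dl -> r * (1 - phl) * dh < Dl ->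
 0 <= y <= 1 -> E <= (1 - phl) * r ->
 0 <= -y*Dl + E*(y*dh + (1-y)*dl) -> E <= 0.
Proof.
move=> dh0 dl0 Dl0 hr /andP[y0 y1] hE hG.
rewrite leNgt; apply/negP => E0.
have h1 : E * dh <= r * (1 - phl) * dh by nra.
have h2 : E * dl < 0 by nra.
have : y * (E * dh - Dl) + (1 - y) * (E * dl) < 0.
  by apply: neg_comb => //; [rewrite y0 y1 | lra].
lra.
Qed.

Lemma case2_l (R : realType) (phl dh dl Dl V y E : R) :
 0 <= dl -> dl < dh -> phl < 1 -> 0 <= V -> 0 <= y <= 1 -> E <= (1 - phl) * V ->
 -y*Dl + E*(y*dh + (1-y)*dl) <= (1 - phl) * V * dh - y * Dl.
Proof.
move=> dl0 dldh phl1 V0 /andP[y0 y1] hE.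
have c0 : 0 <= y*dh + (1-y)*dl by nra.
have c1 : y*dh + (1-y)*dl <= dh by nra.
suff : E*(y*dh + (1-y)*dl) <= (1 - phl) * V * dh by lra.
case: (lerP 0 E) => E0.
  apply: le_trans (_ : E * dh <= _); first by nra.
  by nra.
have : E*(y*dh + (1-y)*dl) <= 0 by nra.
have : 0 <= (1 - phl) * V * dh by apply: mulr_ge0; [apply: mulr_ge0|]; lra.
lra.
Qed.

Lemma case3_h (R : realType) (phh dh dl Dh U x E : R) :
 dh <= 0 -> dl < dh -> 0 < phh -> 0 <= U -> 0 <= x <= 1 -> - (phh * U) <= E ->
 -x*Dh + E*((1-x)*dh + x*dl) <= phh * U * (-dl) - x * Dh.
Proof.
move=> dh0 dldh phh0 U0 /andP[x0 x1] hE.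
have c0 : (1-x)*dh + x*dl <= 0 by nra.
have c1 : dl <= (1-x)*dh + x*dl by nra.
suff : E*((1-x)*dh + x*dl) <= phh * U * (-dl) by lra.
case: (lerP E 0) => E0.
  apply: le_trans (_ : E * dl <= _); first by nra.
  by nra.
have : E*((1-x)*dh + x*dl) <= 0 by nra.
have : 0 <= phh * U * (-dl) by apply: mulr_ge0; [apply: mulr_ge0|]; lra.
lra.
Qed.

Lemma case1_full (R : realType) (phh phl dh dl Dh Dl ci d Xs Ys x y : R) :
 0 < phl -> phl < phh -> phh < 1 -> 0 < dh -> dl < 0 -> 0 < Dh -> 0 < Dl -> 0 < ci ->
 0 <= Xs -> Xs <= d - 1 -> 0 <= Ys -> Ys <= d - 1 -> 0 <= x <= 1 -> 0 <= y <= 1 ->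
 (d - 1) * ci * phh * (- dl) < Dh -> (d - 1) * ci * (1 - phl) * dh < Dl ->
 0 <= - x * Dh + (ci * ((1-phh) * Ys - phh * Xs)) * ((1 - x) * dh + x * dl) ->
 0 <= - y * Dl + (ci * ((1-phl) * Ys - phl * Xs)) * (y * dh + (1 - y) * dl) ->
 - x * Dh + (ci * ((1-phh) * Ys - phh * Xs)) * ((1 - x) * dh + x * dl) <= 0 /\
 - y * Dl + (ci * ((1-phl) * Ys - phl * Xs)) * (y * dh + (1 - y) * dl) <= 0.
Proof.
move=> phl0 hl phh1 dh0 dl0 Dh0 Dl0 ci0 Xs0 Xs1 Ys0 Ys1 hx hy hr1 hr2 G1 G2.
set r := (d - 1) * ci.
have hEh : - (phh * r) <= ci * ((1 - phh) * Ys - phh * Xs).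
  have h1 : 0 <= ci * ((1 - phh) * Ys) by apply: mulr_ge0; [lra | apply: mulr_ge0; lra].
  have h2 : 0 <= ci * (phh * (d - 1 - Xs)) by apply: mulr_ge0; [lra | apply: mulr_ge0; lra].
  rewrite /r; lra.
have hEl : ci * ((1 - phl) * Ys - phl * Xs) <= (1 - phl) * r.
  have h1 : 0 <= ci * (phl * Xs) by apply: mulr_ge0; [lra | apply: mulr_ge0; lra].
  have h2 : 0 <= ci * ((1 - phl) * (d - 1 - Ys)) by apply: mulr_ge0; [lra | apply: mulr_ge0; lra].
  rewrite /r; lra.
have E1 := case1_h dh0 dl0 Dh0 hr1 (lt_trans phl0 hl) hx hEh G1.
have E2 := case1_l dh0 dl0 Dl0 hr2 hy hEl G2.
have E3 : 0 <= ci * ((phh - phl) * (Xs + Ys)) by apply: mulr_ge0; [lra | apply: mulr_ge0; lra].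
have Eh0 : ci * ((1 - phh) * Ys - phh * Xs) = 0 by apply/eqP; rewrite eq_le E1 andbT; lra.
have El0 : ci * ((1 - phl) * Ys - phl * Xs) = 0 by apply/eqP; rewrite eq_le; apply/andP; split; lra.
rewrite Eh0 El0 !mul0r !addr0.
have [x0 _] := andP hx; have [y0 _] := andP hy.
split; rewrite mulNr oppr_le0; apply: mulr_ge0; lra.
Qed.

Lemma aux1 (R : realType) (ci p Ys Xs : R) : 0 < ci -> 0 <= p -> 0 <= Xs ->
  ci*((1-p)*Ys - p*Xs) <= (1-p)*(ci*Ys).
Proof.
move=> c0 p0 X0; have : 0 <= ci * (p * Xs) by apply: mulr_ge0; [lra | apply: mulr_ge0].
lra.
Qed.

Lemma aux2 (R : realType) (ci p Ys Xs : R) : 0 < ci -> p <= 1 -> 0 <= Ys ->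
  -(p*(ci*Xs)) <= ci*((1-p)*Ys - p*Xs).
Proof.
move=> c0 p1 Y0; have : 0 <= ci * ((1 - p) * Ys) by apply: mulr_ge0; [lra | apply: mulr_ge0; lra].
lra.
Qed.

Lemma zero_of (R : realType) (Y K L : R) : 0 <= Y -> K < L -> 0 <= K*Y - L*Y -> Y = 0.
Proof.
move=> Y0 KL h; apply/eqP; rewrite eq_le Y0 andbT.
rewrite leNgt; apply/negP => Ypos.
have : 0 < Y * (L - K) by apply: mulr_gt0; lra.
lra.
Qed.

Lemma split0 (R : realType) (Y a b : R) : Y = a + b -> Y = 0 -> 0 <= a -> 0 <= b -> a = 0 /\ b = 0.
Proof. move=> e Y0 a0 b0; split; lra. Qed.

Lemma case2_tail (R : realType) (phh phl dh dl Dh Dl ci Xs x : R) :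
 0 < phl -> phl < phh -> 0 < dh -> 0 <= dl -> 0 < Dh -> 0 < Dl -> 0 < ci -> 0 <= Xs -> 0 <= x <= 1 ->
 - x * Dh + ci * ((1 - phh) * 0 - phh * Xs) * ((1 - x) * dh + x * dl) <= 0 /\
 - 0 * Dl + ci * ((1 - phl) * 0 - phl * Xs) * (0 * dh + (1 - 0) * dl) <= 0.
Proof.
move=> phl0 hl dh0 dl0 Dh0 Dl0 ci0 Xs0 /andP[x0 x1].
have h1 : 0 <= ci * (phh * Xs) by apply: mulr_ge0; [lra | apply: mulr_ge0; lra].
have h2 : 0 <= ci * (phl * Xs) by apply: mulr_ge0; [lra | apply: mulr_ge0; lra].
have hco : 0 <= (1 - x) * dh + x * dl by apply: addr_ge0; apply: mulr_ge0; lra.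
have h3 : 0 <= ci * (phh * Xs) * ((1 - x) * dh + x * dl) by apply: mulr_ge0.
have h4 : 0 <= ci * (phl * Xs) * dl by apply: mulr_ge0.
have h5 : 0 <= x * Dh by apply: mulr_ge0; lra.
split; lra.
Qed.

Lemma case3_tail (R : realType) (phh phl dh dl Dh Dl ci Ys y : R) :
 phl < phh -> phh < 1 -> dh <= 0 -> dl < 0 -> 0 < Dh -> 0 < Dl -> 0 < ci -> 0 <= Ys -> 0 <= y <= 1 ->
 - 0 * Dh + ci * ((1 - phh) * Ys - phh * 0) * ((1 - 0) * dh + 0 * dl) <= 0 /\
 - y * Dl + ci * ((1 - phl) * Ys - phl * 0) * (y * dh + (1 - y) * dl) <= 0.
Proof.
move=> hl phh1 dh0 dl0 Dh0 Dl0 ci0 Ys0 /andP[y0 y1].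
have h1 : 0 <= ci * ((1 - phh) * Ys) by apply: mulr_ge0; [lra | apply: mulr_ge0; lra].
have h2 : 0 <= ci * ((1 - phl) * Ys) by apply: mulr_ge0; [lra | apply: mulr_ge0; lra].
have hco : (y * dh + (1 - y) * dl) <= 0.
  have : y * dh <= 0 by apply: mulr_ge0_le0; lra.
  have : (1 - y) * dl <= 0 by apply: mulr_ge0_le0; lra.
  lra.
have h3 : ci * ((1 - phl) * Ys) * (y * dh + (1 - y) * dl) <= 0 by apply: mulr_ge0_le0.
have h4 : ci * ((1 - phh) * Ys) * dh <= 0 by apply: mulr_ge0_le0.
have h5 : 0 <= y * Dl by apply: mulr_ge0; lra.
split; lra.
Qed.


Lemma sum_neq_const (R : realType) n (i : 'I_n) (A : R) :
  \sum_(j | j != i) A = A * (n.-1)%:R.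
Proof.
rewrite (eq_bigl (fun j => j \in predC1 i)) // sumr_const cardC1 card_ord.
by rewrite mulr_natr.
Qed.

Lemma interim_decomp (R : realType) n (Q : profile n -> R) PS ph phh phl S i s :
 (1 < n)%N -> is_prior Q -> 0 < ph < 1 -> has_marginals Q ph phh phl ->
 interim Q PS phh phl S i s =
 beta (S i) s * exp_score PS (Pcond phh phl s) phh +
 (1 - beta (S i) s) * exp_score PS (Pcond phh phl s) phl +
 ((n.-1)%:R^-1 * \sum_(j | j != i) (qf phh phl S j s - Pcond phh phl s)) *
 (beta (S i) s * (PS true phh - PS false phh) + (1 - beta (S i) s) * (PS true phl - PS false phl)).
Proof.
move=> n1 HQ Hph HM.
rewrite (interim_eq PS S i s HQ Hph HM).
set b := beta (S i) s; set p := Pcond phh phl s.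
rewrite (eq_bigr (fun j => (b * exp_score PS p phh + (1 - b) * exp_score PS p phl) +
   (qf phh phl S j s - p) * (b * (PS true phh - PS false phh) + (1 - b) * (PS true phl - PS false phl)))); last first.
  by move=> j _; rewrite /exp_score; ring.
rewrite big_split /= sum_neq_const -mulr_suml.
have c0 : (n.-1)%:R != 0 :> R by rewrite pnatr_eq0 -lt0n -ltnS prednK // ltnW.
by field.
Qed.

Lemma interim_truth (R : realType) n (Q : profile n -> R) PS ph phh phl i s :
 (1 < n)%N -> is_prior Q -> 0 < ph < 1 -> has_marginals Q ph phh phl ->
 interim Q PS phh phl (@truthful_profile R n) i s =
 exp_score PS (Pcond phh phl s) (Pcond phh phl s).
Proof.
move=> n1 HQ Hph HM.
rewrite (interim_decomp PS _ i s n1 HQ Hph HM).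
rewrite (eq_bigr (fun j => 0)); last first.
  by move=> j _; rewrite /qf /truthful_profile /truthful /beta /=; ring.
rewrite big1 // mulr0 mul0r addr0 /truthful_profile /truthful /beta /=.
by case: s => /=; ring.
Qed.


Lemma sum_ind (R : realType) n (D : {set 'I_n}) :
  \sum_(j : 'I_n) (j \in D)%:R = #|D|%:R :> R.
Proof.
rewrite (eq_bigr (fun j => if j \in D then 1 else 0)); last by move=> j _; case: (j \in D).
by rewrite -big_mkcond sumr_const.
Qed.

Lemma sum_out (R : realType) n (D : {set 'I_n}) (y : 'I_n -> R) :
  (forall j, j \notin D -> y j = 0) -> \sum_j y j = \sum_(j in D) y j.
Proof.
move=> hy; rewrite (bigID (fun j => j \in D)) /= [X in _ + X]big1 ?addr0 //.
Qed.

Lemma sum_minus (R : realType) n (y : 'I_n -> R) i :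
  \sum_(j | j != i) y j = \sum_j y j - y i.
Proof. by rewrite [in RHS](bigD1 i) //= addrC addrK. Qed.

Lemma sum_pairs (R : realType) n (D : {set 'I_n}) (y : 'I_n -> R) :
  (forall j, j \notin D -> y j = 0) ->
  \sum_(i in D) \sum_(j | j != i) y j = (#|D|%:R - 1) * \sum_j y j.
Proof.
move=> hy.
under eq_bigr do rewrite sum_minus.
rewrite sumrB sumr_const -(sum_out hy) mulrBl mul1r.
by rewrite mulr_natl.
Qed.

Lemma sum_le_ind (R : realType) n (D : {set 'I_n}) (x : 'I_n -> R) i :
  i \in D -> (forall j, j \notin D -> x j = 0) -> (forall j, x j <= 1) ->
  \sum_(j | j != i) x j <= #|D|%:R - 1.
Proof.
move=> iD hx x1.
apply: le_trans (_ : \sum_(j | j != i) (j \in D)%:R <= _).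
  apply: ler_sum => j _; case jD: (j \in D) => //.
  by rewrite hx ?jD.
by rewrite sum_minus sum_ind iD.
Qed.

Lemma le_ceil_lt (R : realType) (k : nat) (X : R) : (k%:Z <= Num.ceil X) -> k%:R - 1 < X.
Proof.
move=> h.
have h2 : (k%:Z - 1 < Num.ceil X) by lia.
by move: h2; rewrite ceil_gt_int intrB.
Qed.

Lemma mul_ci (R : realType) (a b c ci : R) : 0 < ci -> c * ci = 1 -> a < c * b -> a * ci < b.
Proof.
move=> ci0 cci h.
have : a * ci < c * b * ci by rewrite ltr_pM2r.
by rewrite mulrAC cci mul1r.
Qed.

Lemma part1 (R : realType) (ph phh phl : R) (PS : bool -> R -> R) n (Q : profile n -> R)
   (D : {set 'I_n}) (S' : sprofile R n) :
  0 < ph < 1 -> phl < phh -> 0 < phl -> phh < 1 -> strictly_proper PS -> (1 < n)%N ->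
  is_prior Q -> has_marginals Q ph phh phl ->
  (#|D|%:Z <= kB n PS phh phl) -> valid_sprofile S' ->
  (forall j, j \notin D -> S' j = @truthful_profile R n j) ->
  (forall i s, i \in D -> interim Q PS phh phl (@truthful_profile R n) i s <= interim Q PS phh phl S' i s) ->
  forall i s, i \in D -> interim Q PS phh phl S' i s <= interim Q PS phh phl (@truthful_profile R n) i s.
Proof.
move=> Hph hl phl0 phh1 HP n1 HQ HM HkB HV Hout HG.
set c := (n.-1)%:R : R.
have c0 : 0 < c by rewrite /c ltr0n -ltnS prednK // ltnW.
set dh := PS true phh - PS false phh.
set dl := PS true phl - PS false phl.
set Dh := exp_score PS phh phh - exp_score PS phh phl.
set Dl := exp_score PS phl phl - exp_score PS phl phh.
have Dh0 : 0 < Dh.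
  rewrite subr_gt0; apply: HP; first (by apply/andP; split; lra); first (by apply/andP; split; lra).
  by rewrite (gt_eqF hl).
have Dl0 : 0 < Dl.
  rewrite subr_gt0; apply: HP; first (by apply/andP; split; lra); first (by apply/andP; split; lra).
  by rewrite (lt_eqF hl).
have dldh : dl < dh.
  have : Dh + Dl = (phh - phl) * (dh - dl) by rewrite /Dh /Dl /dh /dl /exp_score; ring.
  nra.
pose x j := 1 - beta (S' j) true.
pose y j := beta (S' j) false.
have xout j : j \notin D -> x j = 0 by move=> /Hout; rewrite /x => ->; rewrite /= subrr.
have yout j : j \notin D -> y j = 0 by move=> /Hout; rewrite /y => ->.
have x01 j : 0 <= x j <= 1.
  by have := HV j; rewrite /valid_strategy => -[_ /andP[h1 h2]]; rewrite /x /beta /=; apply/andP; split; lra.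
have y01 j : 0 <= y j <= 1.
  by have := HV j; rewrite /valid_strategy => -[/andP[h1 h2] _]; rewrite /y /beta /=; apply/andP; split; lra.
pose Xs i := \sum_(j | j != i) x j.
pose Ys i := \sum_(j | j != i) y j.
have Xs0 i : 0 <= Xs i by apply: sumr_ge0 => j _; have /andP[] := x01 j.
have Ys0 i : 0 <= Ys i by apply: sumr_ge0 => j _; have /andP[] := y01 j.
set d := #|D|%:R : R.
have Xs1 i : i \in D -> Xs i <= d - 1.
  by move=> iD; apply: sum_le_ind => // j; have /andP[] := x01 j.
have Ys1 i : i \in D -> Ys i <= d - 1.
  by move=> iD; apply: sum_le_ind => // j; have /andP[] := y01 j.
have sumh i : \sum_(j | j != i) (qf phh phl S' j true - Pcond phh phl true) = (1-phh) * Ys i - phh * Xs i.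
  rewrite /Ys /Xs !mulr_sumr -sumrB; apply: eq_bigr => j _.
  by rewrite /qf /x /y /=; ring.
have suml i : \sum_(j | j != i) (qf phh phl S' j false - Pcond phh phl false) = (1-phl) * Ys i - phl * Xs i.
  rewrite /Ys /Xs !mulr_sumr -sumrB; apply: eq_bigr => j _.
  by rewrite /qf /x /y /=; ring.
have Gh i : interim Q PS phh phl S' i true - interim Q PS phh phl (@truthful_profile R n) i true
   = - x i * Dh + (c^-1 * ((1-phh) * Ys i - phh * Xs i)) * ((1 - x i) * dh + x i * dl).
  rewrite (interim_decomp PS S' i true n1 HQ Hph HM) (interim_truth PS i true n1 HQ Hph HM) sumh.
  by rewrite /x /Dh /dh /dl /c /=; ring.
have Gl i : interim Q PS phh phl S' i false - interim Q PS phh phl (@truthful_profile R n) i false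
   = - y i * Dl + (c^-1 * ((1-phl) * Ys i - phl * Xs i)) * (y i * dh + (1 - y i) * dl).
  rewrite (interim_decomp PS S' i false n1 HQ Hph HM) (interim_truth PS i false n1 HQ Hph HM) suml.
  by rewrite /y /Dl /dh /dl /c /=; ring.
have Gh0 i : i \in D -> 0 <= - x i * Dh + (c^-1 * ((1-phh) * Ys i - phh * Xs i)) * ((1 - x i) * dh + x i * dl).
  by move=> iD; rewrite -Gh subr_ge0; apply: HG.
have Gl0 i : i \in D -> 0 <= - y i * Dl + (c^-1 * ((1-phl) * Ys i - phl * Xs i)) * (y i * dh + (1 - y i) * dl).
  by move=> iD; rewrite -Gl subr_ge0; apply: HG.
suff : forall i, i \in D ->
   - x i * Dh + (c^-1 * ((1-phh) * Ys i - phh * Xs i)) * ((1 - x i) * dh + x i * dl) <= 0 /\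
   - y i * Dl + (c^-1 * ((1-phl) * Ys i - phl * Xs i)) * (y i * dh + (1 - y i) * dl) <= 0.
  move=> H i s iD; have [H1 H2] := H i iD.
  by case: s; rewrite -subr_le0; [rewrite Gh | rewrite Gl].
have [HkBh HkBl] : (#|D|%:Z <= kBh n PS phh phl) /\ (#|D|%:Z <= kBl n PS phh phl).
  by move: HkB; rewrite /kB !le_min => /andP[-> /andP[-> _]].
have condh : 0 < dh -> (d - 1) * ((1 - phl) * dh) < c * Dl.
  move=> dh0; move: HkBh; rewrite /kBh ifT; last by rewrite -subr_gt0.
  move/le_ceil_lt; rewrite ltr_pdivlMr //.
  by apply: mulr_gt0; rewrite /dh in dh0; lra.
have condl : dl < 0 -> (d - 1) * (phh * (PS false phl - PS true phl)) < c * Dh.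
  move=> dl0; move: HkBl; rewrite /kBl ifT; last by rewrite -subr_lt0.
  move/le_ceil_lt; rewrite ltr_pdivlMr //.
  by apply: mulr_gt0; rewrite /dl in dl0; lra.
set ci := c^-1.
have ci0 : 0 < ci by rewrite invr_gt0.
have cci : c * ci = 1 by rewrite /ci divff // gt_eqF.
have Yi_eq i : \sum_j y j = y i + Ys i by rewrite /Ys sum_minus addrC subrK.
have Xi_eq i : \sum_j x j = x i + Xs i by rewrite /Xs sum_minus addrC subrK.
clear HG Gh Gl sumh suml HkB HkBh HkBl Hout HV HP HM HQ Hph.
move=> i iD.
have Xsi0 := Xs0 i; have Ysi0 := Ys0 i; have Xsi1 := Xs1 i iD; have Ysi1 := Ys1 i iD.
case: (ltrP 0 dh) => dh0.
  case: (ltrP dl 0) => dl0.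
    have hr1 : (d - 1) * ci * phh * (- dl) < Dh.
      have := condl dl0.
      have -> : PS false phl - PS true phl = - dl by rewrite /dl opprB.
      move=> /(mul_ci ci0 cci) h2.
      by apply: le_lt_trans h2; rewrite le_eqVlt; apply/orP; left; apply/eqP; ring.
    have hr2 : (d - 1) * ci * (1 - phl) * dh < Dl.
      move: (condh dh0) => /(mul_ci ci0 cci) h2.
      by apply: le_lt_trans h2; rewrite le_eqVlt; apply/orP; left; apply/eqP; ring.
    exact: case1_full phl0 hl phh1 dh0 dl0 Dh0 Dl0 ci0 Xsi0 Xsi1 Ysi0 Ysi1 (x01 i) (y01 i) hr1 hr2 (Gh0 i iD) (Gl0 i iD).
  have phl1 : phl < 1 := lt_trans hl phh1.
  have bound k : k \in D -> 0 <= (1 - phl) * (ci * Ys k) * dh - y k * Dl.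
    move=> kD; apply: le_trans (Gl0 k kD) _.
    apply: case2_l => //.
      by apply: mulr_ge0; [exact: ltW | apply: Ys0].
    by rewrite -/ci; apply: aux1; [exact: ci0 | exact: ltW | apply: Xs0].
  have S0 : 0 <= \sum_(k in D) ((1 - phl) * (ci * Ys k) * dh - y k * Dl) by apply: sumr_ge0.
  rewrite sumrB in S0.
  have e1 : \sum_(k in D) (1 - phl) * (ci * Ys k) * dh = (d - 1) * ((1 - phl) * dh) * ci * \sum_j y j.
    have -> : (d - 1) * ((1 - phl) * dh) * ci * \sum_j y j = ((1 - phl) * dh * ci) * ((#|D|%:R - 1) * \sum_j y j) by rewrite /d; ring.
    rewrite -(sum_pairs yout) mulr_sumr; apply: eq_bigr => k _; rewrite /Ys; ring.
  have e2 : \sum_(k in D) y k * Dl = Dl * \sum_j y j.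
    by rewrite (sum_out yout) mulr_sumr; apply: eq_bigr => k _; ring.
  rewrite e1 e2 in S0.
  have Y0 : 0 <= \sum_j y j by apply: sumr_ge0 => j _; have /andP[] := y01 j.
  have hc2 : (d - 1) * ((1 - phl) * dh) * ci < Dl by exact: mul_ci ci0 cci (condh dh0).
  have YY := zero_of Y0 hc2 S0.
  have [yi ysi] := split0 (Yi_eq i) YY (proj1 (andP (y01 i))) Ysi0.
  rewrite yi ysi.
  exact: case2_tail phl0 hl dh0 dl0 Dh0 Dl0 ci0 Xsi0 (x01 i).
have dl0 : dl < 0 := lt_le_trans dldh dh0.
have phh0 : 0 < phh := lt_trans phl0 hl.
have bound k : k \in D -> 0 <= phh * (ci * Xs k) * (- dl) - x k * Dh.
  move=> kD; apply: le_trans (Gh0 k kD) _.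
  apply: case3_h => //.
    by apply: mulr_ge0; [exact: ltW | apply: Xs0].
  by rewrite -/ci; apply: aux2; [exact: ci0 | exact: ltW | apply: Ys0].
have S0 : 0 <= \sum_(k in D) (phh * (ci * Xs k) * (- dl) - x k * Dh) by apply: sumr_ge0.
rewrite sumrB in S0.
have e1 : \sum_(k in D) phh * (ci * Xs k) * (- dl) = (d - 1) * (phh * - dl) * ci * \sum_j x j.
  have -> : (d - 1) * (phh * - dl) * ci * \sum_j x j = (phh * - dl * ci) * ((#|D|%:R - 1) * \sum_j x j) by rewrite /d; ring.
  rewrite -(sum_pairs xout) mulr_sumr; apply: eq_bigr => k _; rewrite /Xs; ring.
have e2 : \sum_(k in D) x k * Dh = Dh * \sum_j x j.
  by rewrite (sum_out xout) mulr_sumr; apply: eq_bigr => k _; ring.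
rewrite e1 e2 in S0.
have X0 : 0 <= \sum_j x j by apply: sumr_ge0 => j _; have /andP[] := x01 j.
have hc := condl dl0.
rewrite (_ : PS false phl - PS true phl = - dl) in hc; last by rewrite /dl opprB.
have hc2 : (d - 1) * (phh * - dl) * ci < Dh by exact: mul_ci ci0 cci hc.
have XX := zero_of X0 hc2 S0.
have [xi xsi] := split0 (Xi_eq i) XX (proj1 (andP (x01 i))) Xsi0.
rewrite xi xsi.
exact: case3_tail hl phh1 dh0 dl0 Dh0 Dl0 ci0 Ysi0 (y01 i).
Qed.


Lemma card_lt (n d : nat) : (d <= n)%N -> #|[set j : 'I_n | (j < d)%N]| = d.
Proof.
move=> dn.
have -> : [set j : 'I_n | (j < d)%N] = (widen_ord dn) @: [set: 'I_d].
  apply/setP => j; rewrite inE; apply/idP/imsetP.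
    move=> jd; exists (Ordinal jd); first by rewrite inE.
    by apply: val_inj.
  by move=> [j' _ ->] /=.
by rewrite card_imset ?cardsT ?card_ord //; by move=> x y /(congr1 val) /= xy; apply: val_inj.
Qed.

Lemma sum_ind_minus (R : realType) n (D : {set 'I_n}) i (p : R) :
  i \in D -> \sum_(j | j != i) (p * (j \in D)%:R) = p * (#|D|%:R - 1).
Proof. by move=> iD; rewrite -mulr_sumr sum_minus sum_ind iD. Qed.

Lemma dev_h (R : realType) (ph phh phl : R) (PS : bool -> R -> R) n (Q : profile n -> R) (a : nat) :
  0 < ph < 1 -> phl < phh -> 0 < phl -> phh < 1 -> (1 < n)%N ->
  is_prior Q -> has_marginals Q ph phh phl -> (a.+1 <= n)%N -> (0 < a)%N ->
  0 < PS true phh - PS false phh ->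
  (n.-1)%:R * (exp_score PS phl phl - exp_score PS phl phh) <= a%:R * ((1 - phl) * (PS true phh - PS false phh)) ->
  exists (D : {set 'I_n}) (S' : sprofile R n),
    [/\ #|D| = a.+1, valid_sprofile S',
        (forall j, j \notin D -> S' j = @truthful_profile R n j),
        (forall i s, i \in D -> interim Q PS phh phl (@truthful_profile R n) i s <= interim Q PS phh phl S' i s) &
        (exists i s, i \in D /\ interim Q PS phh phl (@truthful_profile R n) i s < interim Q PS phh phl S' i s)].
Proof.
move=> Hph hl phl0 phh1 n1 HQ HM an a0 dh0 cond.
set D := [set j : 'I_n | (j < a.+1)%N].
have cD : #|D| = a.+1 by apply: card_lt.
pose S' : sprofile R n := fun j => if j \in D then ((1 : R), (1 : R)) else @truthful_profile R n j.
have bt j : beta (S' j) true = 1 by rewrite /S' /beta; case: (j \in D).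
have bf j : beta (S' j) false = (j \in D)%:R by rewrite /S' /beta; case: (j \in D).
set c := (n.-1)%:R : R.
have c0 : 0 < c by rewrite /c ltr0n -ltnS prednK // ltnW.
have G i s : i \in D -> interim Q PS phh phl S' i s =
    exp_score PS (Pcond phh phl s) phh + c^-1 * ((1 - Pcond phh phl s) * a%:R) * (PS true phh - PS false phh).
  move=> iD.
  rewrite (interim_decomp PS S' i s n1 HQ Hph HM).
  have -> : beta (S' i) s = 1 by case: s; rewrite ?bt ?bf ?iD.
  rewrite (eq_bigr (fun j => (1 - Pcond phh phl s) * (j \in D)%:R)); last first.
    by move=> j _; rewrite /qf bt bf; ring.
  rewrite sum_ind_minus // cD.
  have -> : (a.+1%:R - 1 : R) = a%:R by rewrite -natr1 addrK.
  ring.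
have i0D : (Ordinal (leq_ltn_trans (leq0n a) an) : 'I_n) \in D by rewrite inE.
exists D, S'; split => //.
- move=> j; rewrite /valid_strategy /S'; case: (j \in D) => /=; rewrite /truthful_profile /truthful /=; split; apply/andP; split; lra.
- by move=> j jD; rewrite /S' (negbTE jD).
- move=> i s iD; rewrite G // (interim_truth PS i s n1 HQ Hph HM).
  have h1 : 0 < c^-1 by rewrite invr_gt0.
  have ha : 0 < a%:R :> R by rewrite ltr0n.
  case: s => /=.
    have : 0 <= c^-1 * ((1 - phh) * a%:R) * (PS true phh - PS false phh).
      by apply: mulr_ge0; [apply: mulr_ge0; [lra | apply: mulr_ge0; lra] | lra].
    lra.
  have : c * (exp_score PS phl phl - exp_score PS phl phh) <= c * (c^-1 * ((1 - phl) * a%:R) * (PS true phh - PS false phh)).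
    by rewrite mulrA mulrA mulfV ?gt_eqF // mul1r; apply: le_trans cond _; rewrite le_eqVlt; apply/orP; left; apply/eqP; ring.
  rewrite ler_pM2l //; lra.
- exists (Ordinal (leq_ltn_trans (leq0n a) an)), true; split => //.
  rewrite G // (interim_truth PS _ true n1 HQ Hph HM) /=.
  have h1 : 0 < c^-1 by rewrite invr_gt0.
  have ha : 0 < a%:R :> R by rewrite ltr0n.
  have : 0 < c^-1 * ((1 - phh) * a%:R) * (PS true phh - PS false phh).
    by apply: mulr_gt0; [apply: mulr_gt0; [lra | apply: mulr_gt0; lra] | lra].
  lra.
Qed.

Lemma dev_l (R : realType) (ph phh phl : R) (PS : bool -> R -> R) n (Q : profile n -> R) (a : nat) :
  0 < ph < 1 -> phl < phh -> 0 < phl -> phh < 1 -> (1 < n)%N ->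
  is_prior Q -> has_marginals Q ph phh phl -> (a.+1 <= n)%N -> (0 < a)%N ->
  0 < PS false phl - PS true phl ->
  (n.-1)%:R * (exp_score PS phh phh - exp_score PS phh phl) <= a%:R * (phh * (PS false phl - PS true phl)) ->
  exists (D : {set 'I_n}) (S' : sprofile R n),
    [/\ #|D| = a.+1, valid_sprofile S',
        (forall j, j \notin D -> S' j = @truthful_profile R n j),
        (forall i s, i \in D -> interim Q PS phh phl (@truthful_profile R n) i s <= interim Q PS phh phl S' i s) &
        (exists i s, i \in D /\ interim Q PS phh phl (@truthful_profile R n) i s < interim Q PS phh phl S' i s)].
Proof.
move=> Hph hl phl0 phh1 n1 HQ HM an a0 dl0 cond.
set D := [set j : 'I_n | (j < a.+1)%N].
have cD : #|D| = a.+1 by apply: card_lt.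
pose S' : sprofile R n := fun j => if j \in D then ((0 : R), (0 : R)) else @truthful_profile R n j.
have bt j : beta (S' j) true = 1 - (j \in D)%:R by rewrite /S' /beta; case: (j \in D) => /=; rewrite ?subrr ?subr0.
have bf j : beta (S' j) false = 0 by rewrite /S' /beta; case: (j \in D).
set c := (n.-1)%:R : R.
have c0 : 0 < c by rewrite /c ltr0n -ltnS prednK // ltnW.
have G i s : i \in D -> interim Q PS phh phl S' i s =
    exp_score PS (Pcond phh phl s) phl + c^-1 * (Pcond phh phl s * a%:R) * (PS false phl - PS true phl).
  move=> iD.
  rewrite (interim_decomp PS S' i s n1 HQ Hph HM).
  have -> : beta (S' i) s = 0 by case: s; rewrite ?bt ?bf ?iD ?subrr.
  rewrite (eq_bigr (fun j => (- Pcond phh phl s) * (j \in D)%:R)); last first.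
    by move=> j _; rewrite /qf bt bf; ring.
  rewrite sum_ind_minus // cD.
  have -> : (a.+1%:R - 1 : R) = a%:R by rewrite -natr1 addrK.
  ring.
have i0D : (Ordinal (leq_ltn_trans (leq0n a) an) : 'I_n) \in D by rewrite inE.
exists D, S'; split => //.
- move=> j; rewrite /valid_strategy /S'; case: (j \in D) => /=; rewrite /truthful_profile /truthful /=; split; apply/andP; split; lra.
- by move=> j jD; rewrite /S' (negbTE jD).
- move=> i s iD; rewrite G // (interim_truth PS i s n1 HQ Hph HM).
  have h1 : 0 < c^-1 by rewrite invr_gt0.
  have ha : 0 < a%:R :> R by rewrite ltr0n.
  case: s => /=; last first.
    have : 0 <= c^-1 * (phl * a%:R) * (PS false phl - PS true phl).
      by apply: mulr_ge0; [apply: mulr_ge0; [lra | apply: mulr_ge0; lra] | lra].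
    lra.
  have : c * (exp_score PS phh phh - exp_score PS phh phl) <= c * (c^-1 * (phh * a%:R) * (PS false phl - PS true phl)).
    by rewrite mulrA mulrA mulfV ?gt_eqF // mul1r; apply: le_trans cond _; rewrite le_eqVlt; apply/orP; left; apply/eqP; ring.
  rewrite ler_pM2l //; lra.
- exists (Ordinal (leq_ltn_trans (leq0n a) an)), false; split => //.
  rewrite G // (interim_truth PS _ false n1 HQ Hph HM) /=.
  have h1 : 0 < c^-1 by rewrite invr_gt0.
  have ha : 0 < a%:R :> R by rewrite ltr0n.
  have : 0 < c^-1 * (phl * a%:R) * (PS false phl - PS true phl).
    by apply: mulr_gt0; [apply: mulr_gt0; [lra | apply: mulr_gt0; lra] | lra].
  lra.
Qed.

Unset Implicit Arguments. Set Strict Implicit.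

Theorem theorem2 (R : realType) (ph phh phl : R) (PS : bool -> R -> R) :
  0 < ph < 1 -> phl < phh -> 0 < phl -> phh < 1 ->
  strictly_proper PS ->
  exists n0 : nat, forall (n : nat) (Q : profile n -> R),
    (n0 <= n)%N ->
    is_prior Q -> symmetric_prior Q -> has_marginals Q ph phh phl ->
    k_strong_eq Q PS phh phl (kB n PS phh phl) (@truthful_profile R n) /\
    (forall k : int, kB n PS phh phl < k -> k <= n%:Z ->
       ~ k_strong_eq Q PS phh phl k (@truthful_profile R n)).
Proof.
move=> Hph hl phl0 phh1 HP; exists 2%N => n Q n2 HQ _ HM; split.
  move=> [D [S' [HD HV Hout HG [i [s [iD Hlt]]]]]].
  have := part1 Hph hl phl0 phh1 HP n2 HQ HM HD HV Hout HG s iD.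
  by rewrite leNgt Hlt.
have Dh0 : 0 < exp_score PS phh phh - exp_score PS phh phl.
  rewrite subr_gt0; apply: HP; first (by apply/andP; split; lra); first (by apply/andP; split; lra).
  by rewrite (gt_eqF hl).
have Dl0 : 0 < exp_score PS phl phl - exp_score PS phl phh.
  rewrite subr_gt0; apply: HP; first (by apply/andP; split; lra); first (by apply/andP; split; lra).
  by rewrite (lt_eqF hl).
have c0 : 0 < (n.-1)%:R :> R by rewrite ltr0n -ltnS prednK // ltnW.
move=> k hk hkn; apply.
move: hk; rewrite /kB !gt_min => /orP[hk | /orP[hk | hk]]; last by move: (lt_le_trans hk hkn); rewrite ltxx.
  move: hk; rewrite /kBh; case: ifP => hh hk; last by move: (lt_le_trans hk hkn); rewrite ltxx.
  have dh0 : 0 < PS true phh - PS false phh by rewrite subr_gt0.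
  set X := (n.-1)%:R * (exp_score PS phl phl - exp_score PS phl phh) / ((1 - phl) * (PS true phh - PS false phh)) in hk.
  have X0 : 0 < X by apply: divr_gt0; [apply: mulr_gt0 | apply: mulr_gt0 => //; lra].
  have m0 : 0 < Num.ceil X by rewrite ceil_gt0.
  have mX := ceil_ge X.
  have ha : Num.ceil X = (`|Num.ceil X|%N)%:Z by rewrite gez0_abs // ltW.
  move: hk m0 mX; rewrite ha; set a := `|Num.ceil X|%N => hk m0 mX.
  have an : (a.+1 <= n)%N by clear -hk hkn; lia.
  have a0 : (0 < a)%N by clear -m0; lia.
  have cond : (n.-1)%:R * (exp_score PS phl phl - exp_score PS phl phh) <= a%:R * ((1 - phl) * (PS true phh - PS false phh)).
    by move: mX; rewrite /X ler_pdivrMr //; apply: mulr_gt0 => //; lra.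
  have [D [S' [cD HV Hout HG Hs]]] := dev_h Hph hl phl0 phh1 n2 HQ HM an a0 dh0 cond.
  exists D, S'; split => //.
  by rewrite cD; clear -hk; lia.
move: hk; rewrite /kBl; case: ifP => hh hk; last by move: (lt_le_trans hk hkn); rewrite ltxx.
have dl0 : 0 < PS false phl - PS true phl by rewrite subr_gt0.
set X := (n.-1)%:R * (exp_score PS phh phh - exp_score PS phh phl) / (phh * (PS false phl - PS true phl)) in hk.
have X0 : 0 < X by apply: divr_gt0; [apply: mulr_gt0 | apply: mulr_gt0 => //; lra].
have m0 : 0 < Num.ceil X by rewrite ceil_gt0.
have mX := ceil_ge X.
have ha : Num.ceil X = (`|Num.ceil X|%N)%:Z by rewrite gez0_abs // ltW.
move: hk m0 mX; rewrite ha; set a := `|Num.ceil X|%N => hk m0 mX.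
have an : (a.+1 <= n)%N by clear -hk hkn; lia.
have a0 : (0 < a)%N by clear -m0; lia.
have cond : (n.-1)%:R * (exp_score PS phh phh - exp_score PS phh phl) <= a%:R * (phh * (PS false phl - PS true phl)).
  by move: mX; rewrite /X ler_pdivrMr //; apply: mulr_gt0 => //; lra.
have [D [S' [cD HV Hout HG Hs]]] := dev_l Hph hl phl0 phh1 n2 HQ HM an a0 dl0 cond.
exists D, S'; split => //.
by rewrite cD; clear -hk; lia.
Qed.
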